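(* Let $(Q,F)$ be a finite ice quiver with $Q_0=\{1,\dots,m\}$, $F_0=\{n+1,\dots,m\}$, whose Euler matrix $\widehat B$ satisfies $\det\widehat B\neq0$, and let $(\widetilde B,\Lambda)$ be its associated compatible pair. If $v\in Q_0\setminus F_0$ is an unfrozen vertex not incident to loops or $2$-cycles, then the Euler matrix of $\mu_v^{\mathrm{FZ}}(Q,F)$ is invertible and $(\mu_v(\widetilde B),\mu_v(\Lambda))$ is the compatible pair associated with $\mu_v^{\mathrm{FZ}}(Q,F)$.
   Context: Euler matrix: $\widehat B=(b_{ij})_{1\le i,j\le m}$ with $b_{ii}=0$ for $i\le n$, $b_{ii}=1$ for $i>n$, and $b_{ij}=\#\{\text{unfrozen arrows } i\to j\}-\#\{\text{arrows } j\to i\}$ for $i\neq j$. The associated compatible pair is $(\widetilde B,\Lambda)$ with $\widetilde B$ the first $n$ columns of $\widehat B$ and $\Lambda=|\det\widehat B|(\widehat B^{-T}-\widehat B^{-1})$. Mutation rules: $\mu_v(\widetilde B)=(b'_{ij})$ with $b'_{ij}=-b_{ij}$ if $i=v$ or $j=v$, and $b'_{ij}=b_{ij}+[b_{iv}]_+[b_{vj}]_+-[-b_{iv}]_+[-b_{vj}]_+$ otherwise ($[x]_+=\max\{x,0\}$). $\mu_v(\Lambda)=(\lambda'_{ij})$ with $\lambda'_{iv}=-\lambda_{iv}+\sum_{l}[b_{lv}]_+\lambda_{il}$ for $i\neq v$, $\lambda'_{vj}=-\lambda_{vj}+\sum_l[b_{lv}]_+\lambda_{lj}$ for $j\neq v$,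 and $\lambda'_{ij}=\lambda_{ij}$ otherwise. Extended Fomin–Zelevinsky mutation $\mu^{\mathrm{FZ}}_v(Q,F)$: (1) for each pair of arrows $\alpha:u\to v$, $\beta:v\to w$ add an unfrozen arrow $u\to w$; (2) reverse every arrow incident to $v$; (3) remove a maximal collection of $2$-cycles consisting of unfrozen arrows; (4) replace each $2$-cycle in a maximal collection of $2$-cycles containing exactly one frozen arrow by a frozen arrow in the direction of the unfrozen arrow of that $2$-cycle. The frozen vertices are unchanged. *)

(* Defs.v *)
From HB Require Import structures.
From mathcomp Require Import all_boot all_order all_algebra.
Set Implicit Arguments. Unset Strict Implicit. Unset Printing Implicit Defensive.
Import Order.TTheory GRing.Theory Num.Theory.
Local Open Scope ring_scope.

(* An ice quiver with vertex set 'I_(n+k): vertices 0..n-1 (i.e. lshift k _)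
   are unfrozen, vertices n..n+k-1 (i.e. rshift n _) are frozen.
   Arrows are recorded by multiplicities:
     uarr i j = number of unfrozen arrows i -> j (arrows of Q not in F),
     farr i j = number of frozen arrows i -> j (arrows of F). *)
Record iquiver (n k : nat) := IQuiver {
  uarr : 'I_(n + k) -> 'I_(n + k) -> nat;
  farr : 'I_(n + k) -> 'I_(n + k) -> nat }.

Definition frozen (n k : nat) (i : 'I_(n + k)) : bool := (n <= i)%N.

(* F is a subquiver on the frozen vertices: frozen arrows join frozen vertices. *)
Definition iquiver_wf (n k : nat) (Q : iquiver n k) : Prop :=
  forall i j, (0 < farr Q i j)%N -> frozen i && frozen j.

Definition narr (n k : nat) (Q : iquiver n k) i j : nat := (uarr Q i j + farr Q i j)%N.

Definition euler (n k : nat) (Q : iquiver n k) : 'M[rat]_(n + k) :=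
  \matrix_(i, j) if i == j then (if frozen i then 1 else 0)
                 else (uarr Q i j)%:R - (narr Q j i)%:R.

Definition Btilde (n k : nat) (Q : iquiver n k) : 'M[rat]_(n + k, n) :=
  lsubmx (euler Q : 'M[rat]_(n + k, n + k)).

Definition Lambda (n k : nat) (Q : iquiver n k) : 'M[rat]_(n + k) :=
  `|\det (euler Q)| *: ((invmx (euler Q))^T - invmx (euler Q)).

Definition pos (x : rat) : rat := Num.max x 0.

Definition mutB (n k : nat) (B : 'M[rat]_(n + k, n)) (v : 'I_n) : 'M[rat]_(n + k, n) :=
  \matrix_(i, j)
    if (i == lshift k v) || (j == v) then - B i j
    else B i j + pos (B i v) * pos (B (lshift k v) j)
               - pos (- B i v) * pos (- B (lshift k v) j).

Definition mutL (n k : nat) (B : 'M[rat]_(n + k, n)) (L : 'M[rat]_(n + k)) (v : 'I_n)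
  : 'M[rat]_(n + k) :=
  let vv := lshift k v in
  \matrix_(i, j)
    if (j == vv) && (i != vv) then - L i vv + \sum_l pos (B l v) * L i l
    else if (i == vv) && (j != vv) then - L vv j + \sum_l pos (B l v) * L l j
    else L i j.

Section FZ.
Variables (n k : nat) (Q : iquiver n k) (v : 'I_(n + k)).

Definition U1 i j : nat := (uarr Q i j + narr Q i v * narr Q v j)%N.
Definition U2 i j : nat := if (i == v) || (j == v) then U1 j i else U1 i j.
Definition F2 i j : nat := if (i == v) || (j == v) then farr Q j i else farr Q i j.
(* step 3: remove a maximal collection of unfrozen 2-cycles *)
Definition U3 i j : nat := if i == j then U2 i j else (U2 i j - minn (U2 i j) (U2 j i))%N.
(* step 4: number of 2-cycles (frozen i -> j, unfrozen j -> i) in a maximal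
   collection; each is replaced by a frozen arrow j -> i *)
Definition K4 i j : nat := if i == j then 0%N else minn (F2 i j) (U3 j i).
Definition U4 i j : nat := (U3 i j - K4 j i)%N.
Definition F4 i j : nat := (F2 i j - K4 i j + K4 j i)%N.

Definition mutFZ : iquiver n k := IQuiver U4 F4.
End FZ.

(* Main.v *)
Require Import Defs.
From HB Require Import structures.
From mathcomp Require Import all_boot all_order all_algebra.
From mathcomp Require Import ring lra zify.
Import Order.TTheory GRing.Theory Num.Theory.
Local Open Scope ring_scope.

Lemma posE (x : rat) : 0 <= x -> pos x = x.
Proof. by move=> h; rewrite /pos; apply/max_idPl. Qed.
Lemma posN (x : rat) : 0 <= x -> pos (- x) = 0.
Proof. by move=> h; rewrite /pos; apply/max_idPr; rewrite oppr_le0. Qed.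
Lemma pos_split (x : rat) : x = pos x - pos (- x).
Proof.
case: (lerP 0 x) => h; first by rewrite posE // posN // subr0.
have h' : 0 <= - x by rewrite oppr_ge0 ltW.
rewrite [pos (- x)]posE // /pos (max_idPr (ltW h)); by rewrite sub0r opprK.
Qed.

Lemma skew_diag m (M : 'M[rat]_m) i : M^T = - M -> M i i = 0.
Proof.
move=> h; have : M^T i i = (- M) i i by rewrite h.
rewrite !mxE => e; lra.
Qed.

Lemma natK (a b c d : nat) : (a + b = c + d)%N -> (a%:R - d%:R : rat) = c%:R - b%:R.
Proof. move=> h; have := congr1 (fun x => x%:R : rat) h; rewrite !natrD => e; lra. Qed.

Lemma FZnat n k (Q : iquiver n k) (x i j : 'I_(n + k)) : i != j ->
  (U4 Q x i j + (U2 Q x j i + F2 Q x j i) = U2 Q x i j + (U4 Q x j i + F4 Q x j i))%N.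
Proof.
move=> ij; have ji : j != i by rewrite eq_sym.
rewrite /F4 /U4 /K4 /U3 (negbTE ij) (negbTE ji).
move: (U2 Q x i j) (U2 Q x j i) (F2 Q x i j) (F2 Q x j i) => a b g f.
lia.
Qed.

Section Mut.
Variables (n k : nat) (Q : iquiver n k) (v : 'I_n).
Hypothesis wf : iquiver_wf Q.
Local Notation m := (n + k)%N.
Local Notation vv := (lshift k v).
Local Notation B := (euler Q).

Lemma vv_unfrozen : frozen vv = false.
Proof. by rewrite /frozen /= leqNgt ltn_ord. Qed.
Lemma farr_v1 x : farr Q x vv = 0%N.
Proof. by case: (posnP (farr Q x vv)) => // /wf /andP[_]; rewrite vv_unfrozen. Qed.
Lemma farr_v2 x : farr Q vv x = 0%N.
Proof. by case: (posnP (farr Q vv x)) => // /wf /andP[]; rewrite vv_unfrozen. Qed.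
Lemma B_off i j : i != j -> B i j = (uarr Q i j)%:R - (narr Q j i)%:R.
Proof. by move=> h; rewrite mxE (negbTE h). Qed.
Lemma Bvv : B vv vv = 0.
Proof. by rewrite mxE eqxx vv_unfrozen. Qed.
Lemma Bskew x : B x vv = - B vv x.
Proof.
have [->|h] := eqVneq x vv; first by rewrite Bvv oppr0.
rewrite !B_off // ?(eq_sym vv) // /narr farr_v1 farr_v2 !addn0; lra.
Qed.

Definition r : 'rV[rat]_m := delta_mx 0 vv.
Definition c : 'cV[rat]_m := \col_i pos (B i vv).
Definition w : 'cV[rat]_m := c - 2%:R *: r^T.
Definition E : 'M[rat]_m := 1%:M + w *m r.

Lemma wE i : w i 0 = pos (B i vv) - 2%:R * (i == vv)%:R.
Proof. by rewrite !mxE eqxx. Qed.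

Lemma mulE_l p (M : 'M[rat]_(m, p)) i j : (E *m M) i j = M i j + w i 0 * M vv j.
Proof. by rewrite /E mulmxDl mul1mx -mulmxA -rowE !mxE big_ord1 !mxE. Qed.
Lemma mulEt_r p (M : 'M[rat]_(p, m)) i j : (M *m E^T) i j = M i j + M i vv * w j 0.
Proof.
by rewrite /E linearD /= trmx1 trmx_mul mulmxDr mulmx1 mulmxA trmx_delta -colE !mxE big_ord1 !mxE.
Qed.
Lemma mulEt_l p (M : 'M[rat]_(m, p)) i j : (E^T *m M) i j = M i j + (i == vv)%:R * (w^T *m M) 0 j.
Proof.
rewrite /E linearD /= trmx1 trmx_mul mulmxDl mul1mx -mulmxA trmx_delta !mxE big_ord1 !mxE.
by rewrite eqxx andbT.
Qed.
Lemma mulE_r p (M : 'M[rat]_(p, m)) i j : (M *m E) i j = M i j + (M *m w) i 0 * (j == vv)%:R.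
Proof. by rewrite /E mulmxDr mulmx1 mulmxA !mxE big_ord1 !mxE eqxx. Qed.


Lemma pos0 : pos 0 = 0.
Proof. by rewrite /pos maxxx. Qed.

Lemma wvv : w vv 0 = - 2%:R.
Proof. by rewrite wE Bvv pos0 eqxx. Qed.

Lemma rw : r *m w = (- 2%:R)%:M.
Proof. apply/matrixP => a b; rewrite !ord1 /r -rowE [row _ _ _ _]mxE wvv mxE eqxx mulr1n. lra. Qed.

Lemma EE : E *m E = 1%:M.
Proof.
rewrite /E mulmxDl mul1mx mulmxDr mulmx1 -!mulmxA (mulmxA r w) rw.
rewrite mul_scalar_mx -scalemxAr.
apply/matrixP => a b; rewrite /E !mxE; lra.
Qed.

Lemma detEBE : \det (E *m B *m E^T) = \det B.
Proof.
rewrite !det_mulmx det_tr mulrC mulrA -det_mulmx EE det1; lra.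
Qed.

Lemma invEBE : \det B != 0 -> invmx (E *m B *m E^T) = E^T *m invmx B *m E.
Proof.
move=> d.
have uB : B \in unitmx by rewrite unitmxE unitfE.
have uX : E *m B *m E^T \in unitmx by rewrite unitmxE detEBE unitfE.
have YX : E^T *m invmx B *m E *m (E *m B *m E^T) = 1%:M.
  rewrite !mulmxA -(mulmxA _ E E) EE mulmx1 -(mulmxA _ (invmx B)) mulVmx // mulmx1.
  by rewrite -trmx_mul EE trmx1.
by rewrite -[invmx _]mul1mx -YX -(mulmxA _ (E *m B *m E^T)) mulmxV // mulmx1.
Qed.


Lemma euler_mut : narr Q vv vv = 0%N ->
  (forall u, u != vv -> narr Q u vv = 0%N \/ narr Q vv u = 0%N) ->
  euler (mutFZ Q vv) = E *m B *m E^T.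
Proof.
move=> Hl H2; apply/matrixP => i j.
rewrite mulEt_r !mulE_l Bvv !wE [LHS]mxE.
have [<-|ij] := eqVneq i j.
  rewrite [B i i]mxE eqxx (Bskew i); ring.
rewrite /narr /= (@natK _ _ _ _ (@FZnat _ _ Q vv _ _ ij)) /U2 /F2 /U1 /narr.
rewrite !farr_v1 !farr_v2 !addn0.
have Hl' : uarr Q vv vv = 0%N by move: Hl; rewrite /narr farr_v1 addn0.
have [iv|iv] := eqVneq i vv.
  subst i; have jv0 : j != vv by rewrite eq_sym.
  rewrite (negbTE jv0) /= Hl' !muln0 !mul0n !addn0 farr_v2.
  rewrite (B_off _ _ ij) /narr farr_v1 addn0 Bvv pos0 addn0; ring.
have [jv|jv] := eqVneq j vv.
  subst j; rewrite /= Hl' !muln0 !mul0n !addn0 farr_v1.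
  rewrite (B_off _ _ iv) /narr farr_v2 addn0 Bvv pos0; ring.
rewrite /=.
have vi : vv != i by rewrite eq_sym.
have vj : vv != j by rewrite eq_sym.
rewrite (B_off _ _ ij) (B_off _ _ iv) (Bskew j) (B_off _ _ vj) /narr !farr_v1 !farr_v2 !addn0.
have h2 x : x != vv -> uarr Q x vv = 0%N \/ uarr Q vv x = 0%N.
  by move=> /H2; rewrite /narr farr_v1 farr_v2 !addn0.
by case: (h2 i iv) => ->; case: (h2 j jv) => ->;
  rewrite ?sub0r ?subr0 ?opprK ?posN ?posE ?ler0n // !natrD !natrM; ring.
Qed.


Lemma pos_id (x y : rat) :
  pos x * y + x * pos (- y) = pos x * pos y - pos (- x) * pos (- y).
Proof.
have := pos_split x; have := pos_split y.
move: (pos x) (pos (- x)) (pos y) (pos (- y)) => a b c d hy hx.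
rewrite {1}hy {1}hx; ring.
Qed.

Lemma lsubE (M : 'M[rat]_m) x (y : 'I_n) : lsubmx M x y = M x (lshift k y).
Proof. by rewrite mxE. Qed.

Lemma mutB_eq : mutB (lsubmx B) v = lsubmx (E *m B *m E^T).
Proof.
apply/matrixP => i j; rewrite [LHS]mxE !lsubE mulEt_r !mulE_l.
have jE : (lshift k j == vv) = (j == v) by rewrite (inj_eq (@lshift_inj _ _)).
have [->|iv] := eqVneq i vv.
  by rewrite /= Bvv wvv; ring.
have [->|jv] /= := eqVneq j v.
  by rewrite Bvv wvv; ring.
rewrite !wE jE (negbTE iv) (negbTE jv) Bvv (Bskew (lshift k j)).
by rewrite -addrA -pos_id !mulr0 !subr0 ?addr0 addrA.
Qed.

Lemma Lw (L : 'M[rat]_m) i : (L *m w) i 0 = \sum_l pos (B l vv) * L i l - 2%:R * L i vv.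
Proof.
rewrite /w mulmxBr -scalemxAr trmx_delta -colE.
rewrite [LHS]mxE [X in _ + X]mxE [X in _ + - X]mxE [X in _ + - (_ * X)]mxE [X in X + _]mxE.
by congr (_ - _); apply: eq_bigr => l _; rewrite mxE mulrC.
Qed.

Lemma wL (L : 'M[rat]_m) j : (w^T *m L) 0 j = \sum_l pos (B l vv) * L l j - 2%:R * L vv j.
Proof.
rewrite /w linearB /= linearZ /= trmxK mulmxBl -scalemxAl -rowE.
rewrite [LHS]mxE [X in _ + X]mxE [X in _ + - X]mxE [X in _ + - (_ * X)]mxE [X in X + _]mxE.
by congr (_ - _); apply: eq_bigr => l _; rewrite !mxE.
Qed.

Lemma mutL_eq (L : 'M[rat]_m) : L^T = - L -> mutL (lsubmx B) L v = E^T *m L *m E.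
Proof.
move=> sk; apply/matrixP => i j; rewrite [LHS]mxE.
have bE l : lsubmx B l v = B l vv by rewrite lsubE.
under eq_bigr do rewrite bE.
under [\sum_l pos (lsubmx B l v) * L l j]eq_bigr do rewrite bE.
have [iv|iv] := eqVneq i vv.
  subst i; have [jv|jv] := eqVneq j vv.
    subst j; rewrite /= (@skew_diag _ L vv sk).
    apply/esym/(@skew_diag _ _ vv).
    by rewrite !trmx_mul trmxK sk mulmxA mulmxN mulNmx.
  rewrite /= mulE_r mulEt_l wL eqxx (negbTE jv) /=; ring.
rewrite /= -mulmxA mulEt_l (negbTE iv) /= mul0r addr0 mulE_r Lw.
have [->|jv] := eqVneq j vv; rewrite /=; ring.
Qed.

End Mut.

Theorem proposition4p3 (n k : nat) (Q : iquiver n k) (v : 'I_n) :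
  iquiver_wf Q ->
  \det (euler Q) != 0 ->
  narr Q (lshift k v) (lshift k v) = 0%N ->
  (forall u, u != lshift k v ->
     narr Q u (lshift k v) = 0%N \/ narr Q (lshift k v) u = 0%N) ->
  \det (euler (mutFZ Q (lshift k v))) != 0
  /\ mutB (Btilde Q) v = Btilde (mutFZ Q (lshift k v))
  /\ mutL (Btilde Q) (Lambda Q) v = Lambda (mutFZ Q (lshift k v)).
Proof.
move=> wf dB Hl H2.
have eM := @euler_mut _ _ Q v wf Hl H2.
split; first by rewrite eM detEBE.
split; first by rewrite /Btilde eM mutB_eq.
rewrite /Btilde mutL_eq; last first.
  by rewrite /Lambda linearZ /= linearB /= trmxK -scalerN opprB.
rewrite /Lambda eM detEBE (@invEBE _ _ Q v dB) !trmx_mul trmxK mulmxA.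
by rewrite -scalemxAr -scalemxAl mulmxBr mulmxBl.
Qed.
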